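(* Let $\psi(u,v)$ be a conjunction of difference constraints between two integer variables $u,v$ (of the forms $u\le v+d$ and $v\le u+d$, $d\in\mathbb{Z}$) which contains a conjunct $u\le v-c$ for some $c>0$. Let $n\ge3$. Then $\exists S_3,\dots,S_{n-1}.\ \bigwedge_{2\le i\le n-1}\Big(S_i=S_{i+1}\cup\{\min(S_i)\}\wedge\max(S_i)=\max(S_{i+1})\wedge\psi(\min(S_i),\min(S_{i+1}))\Big)$ is equivalent to $S_n\neq\emptyset\wedge S_2\setminus S_n\neq\emptyset\wedge S_n\subseteq S_2\wedge|S_2\setminus S_n|=n-2\wedge\max(S_2\setminus S_n)<\min(S_n)\wedge\forall y,z.\ \big(\mathsf{succ}((S_2\setminus S_n)\cup\{\min(S_n)\},y,z)\rightarrow\psi(y,z)\big)$.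
   Context: Set variables range over finite subsets of $\mathbb{Z}$, integer variables over $\mathbb{Z}$; $\min,\max$ of the empty set are undefined and atoms containing undefined terms are false. $\mathsf{succ}(S,x,y)$ abbreviates $x\in S\wedge y\in S\wedge x<y\wedge\forall z\in S.\,(z\le x\vee y\le z)$, i.e. $y$ is the successor of $x$ in $S$. $|\cdot|$ is cardinality. *)

(* Defs.v *)
(* Finite subsets of Z are represented by sequences of int,
   interpreted only up to membership (all notions below are membership-invariant). *)
From HB Require Import structures.
From mathcomp Require Import all_boot all_order all_algebra.
Set Implicit Arguments. Unset Strict Implicit. Unset Printing Implicit Defensive.
Import Order.TTheory GRing.Theory Num.Theory.
Local Open Scope ring_scope.

(* A difference constraint (b, d) on (u, v):
   b = true  : u <= v + d
   b = false : v <= u + d *)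
Definition dconstr := (bool * int)%type.

Definition psi (cs : seq dconstr) (u v : int) : Prop :=
  forall c, c \in cs -> if c.1 then u <= v + c.2 else v <= u + c.2.

Definition smin (S : seq int) : option int :=
  if S is x :: s then Some (foldr (fun y m => Order.min y m) x s) else None.
Definition smax (S : seq int) : option int :=
  if S is x :: s then Some (foldr (fun y m => Order.max y m) x s) else None.

Definition ssucc (S : seq int) (x y : int) : Prop :=
  x \in S /\ y \in S /\ x < y /\ (forall z, z \in S -> z <= x \/ y <= z).

(* The i-th conjunct:  S_i = S_{i+1} ∪ {min S_i} /\ max S_i = max S_{i+1}
   /\ psi(min S_i, min S_{i+1});  atoms with undefined terms are false. *)
Definition step (cs : seq dconstr) (Si Sj : seq int) : Prop :=
  (match smin Si with Some m => Si =i m :: Sj | None => False end) /\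
  (match smax Si, smax Sj with Some a, Some b => a = b | _, _ => False end) /\
  (match smin Si, smin Sj with Some a, Some b => psi cs a b | _, _ => False end).

Definition sdiff (A B : seq int) : seq int := [seq x <- A | x \notin B].

Definition rhs (cs : seq dconstr) (n : nat) (S2 Sn : seq int) : Prop :=
  let D := sdiff S2 Sn in
  Sn != [::] /\ D != [::] /\ {subset Sn <= S2} /\
  size (undup D) = (n - 2)%N /\
  (match smax D, smin Sn with Some a, Some b => a < b | _, _ => False end) /\
  (forall y z : int,
     (match smin Sn with Some m => ssucc (m :: D) y z | None => False end) ->
     psi cs y z).

(* Main.v *)
Require Import Defs.
From HB Require Import structures.
From mathcomp Require Import all_boot all_order all_algebra.
From mathcomp Require Import zify.
Import Order.TTheory GRing.Theory Num.Theory.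
Local Open Scope ring_scope.

Lemma sminP (S : seq int) :
  match smin S with Some m => m \in S /\ (forall y, y \in S -> m <= y) | None => S = [::] end.
Proof.
case: S => [//|x s] /=.
elim: s => [|y s IH] /=.
  by split; [rewrite inE | move=> z; rewrite inE => /eqP ->].
case: IH => Hin Hle.
have Hle' : forall z, z \in [:: x, y & s] -> z != y -> foldr (fun y0 m => Order.min y0 m) x s <= z.
  by move=> z; rewrite !inE => /or3P [/eqP->|/eqP->|Hz]; rewrite ?eqxx // => _; apply: Hle; rewrite !inE ?eqxx ?Hz ?orbT.
case: leP => H; split.
- by rewrite !inE eqxx orbT.
- move=> z Hz; case: (eqVneq z y) => [->//|ne]; exact: le_trans H (Hle' _ Hz ne).
- by move: Hin; rewrite !inE => /orP [->|->]; rewrite ?orbT.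
- move=> z Hz; case: (eqVneq z y) => [->|ne]; [exact: ltW | exact: Hle' _ Hz ne].
Qed.

Lemma smaxP (S : seq int) :
  match smax S with Some m => m \in S /\ (forall y, y \in S -> y <= m) | None => S = [::] end.
Proof.
case: S => [//|x s] /=.
elim: s => [|y s IH] /=.
  by split; [rewrite inE | move=> z; rewrite inE => /eqP ->].
case: IH => Hin Hle.
have Hle' : forall z, z \in [:: x, y & s] -> z != y -> z <= foldr (fun y0 m => Order.max y0 m) x s.
  by move=> z; rewrite !inE => /or3P [/eqP->|/eqP->|Hz]; rewrite ?eqxx // => _; apply: Hle; rewrite !inE ?eqxx ?Hz ?orbT.
case: leP => H; split.
- by move: Hin; rewrite !inE => /orP [->|->]; rewrite ?orbT.
- move=> z Hz; case: (eqVneq z y) => [->//|ne]; exact: Hle' _ Hz ne.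
- by rewrite !inE eqxx orbT.
- move=> z Hz; case: (eqVneq z y) => [->//|ne]; exact: ltW (le_lt_trans (Hle' _ Hz ne) H).
Qed.

Lemma smin_eq S m : m \in S -> (forall y, y \in S -> m <= y) -> smin S = Some m.
Proof.
move=> Hm Hl; have := sminP S; case: (smin S) => [m'|] .
  by case=> H1 H2; congr Some; apply: le_anti; rewrite H2 // Hl.
by move=> E; rewrite E in Hm.
Qed.

Lemma smax_eq S m : m \in S -> (forall y, y \in S -> y <= m) -> smax S = Some m.
Proof.
move=> Hm Hl; have := smaxP S; case: (smax S) => [m'|] .
  by case=> H1 H2; congr Some; apply: le_anti; rewrite H2 // Hl.
by move=> E; rewrite E in Hm.
Qed.

Lemma smin_none S : smin S = None <-> S = [::].
Proof. by case: S. Qed.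
Lemma smax_none S : smax S = None <-> S = [::].
Proof. by case: S. Qed.

Lemma smin_mem S T : S =i T -> smin S = smin T.
Proof.
move=> E; have := sminP S; case: (smin S) => [m [H1 H2]|H].
  by symmetry; apply: smin_eq; [rewrite -E | move=> y; rewrite -E; apply: H2].
subst S; case: T E => [//|x s] E; have := E x; by rewrite mem_head.
Qed.

Lemma smax_mem S T : S =i T -> smax S = smax T.
Proof.
move=> E; have := smaxP S; case: (smax S) => [m [H1 H2]|H].
  by symmetry; apply: smax_eq; [rewrite -E | move=> y; rewrite -E; apply: H2].
subst S; case: T E => [//|x s] E; have := E x; by rewrite mem_head.
Qed.

Lemma psi_lt cs c u v : 0 < c -> (true, - c) \in cs -> psi cs u v -> u < v.
Proof. move=> hc hin /(_ _ hin) /= H. lia. Qed.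

Lemma forward {cs c} (hc : 0 < c) (hin : (true, - c) \in cs) n (hn : (3 <= n)%N)
  (S : nat -> seq int) :
  (forall i : nat, (2 <= i)%N -> (i <= n - 1)%N -> step cs (S i) (S i.+1)) ->
  rhs cs n (S 2%N) (S n).
Proof.
move=> Hstep.
pose m i := odflt 0 (smin (S i)).
have Hm : forall i, (2 <= i <= n)%N -> smin (S i) = Some (m i).
  move=> i /andP [h1 h2]; rewrite /m.
  case: (ltnP i n) => hi.
    have [] := Hstep i h1 ltac:(lia); case: (smin (S i)) => //.
  have -> : i = (n - 1).+1 by lia.
  have [_ [_ ]] := Hstep (n - 1)%N ltac:(lia) (leqnn _).
  by case: (smin (S (n-1)%N)) => // a; case: (smin _).
have Hst : forall i, (2 <= i)%N -> (i <= n - 1)%N ->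
    (S i =i m i :: S i.+1) /\ psi cs (m i) (m i.+1).
  move=> i h1 h2; have [A [_ B]] := Hstep i h1 h2.
  rewrite Hm ?h1 /= in A; last by lia.
  rewrite Hm ?h1 /= in B; last by lia.
  by rewrite Hm /= in B; last by lia.
have Hmin : forall i, (2 <= i <= n)%N -> m i \in S i /\ forall y, y \in S i -> m i <= y.
  by move=> i hi; have := sminP (S i); rewrite Hm.
have Hinc : forall i j, (2 <= i)%N -> (i < j)%N -> (j <= n)%N -> m i < m j.
  move=> i j h1; elim: j => [//|j IH] hij hjn.
  have hl : m j < m j.+1 by apply: psi_lt hc hin (Hst j _ _).2; lia.
  case: (ltnP i j) => hij'.
    exact: lt_trans (IH hij' ltac:(lia)) hl.
  by have -> : i = j by lia.
have Hinv : forall i j, (2 <= i)%N -> (2 <= j)%N -> (i <= n)%N -> (j <= n)%N ->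
    m i < m j -> (i < j)%N.
  move=> i j h1 h2 h3 h4 H; case: (ltngtP i j) => [//|hji|E].
    by have := Hinc j i h2 hji h3; rewrite ltNge (ltW H).
  by move: H; rewrite E ltxx.
have Hmem : forall k, (2 <= k <= n)%N -> forall x,
    x \in S 2%N <-> x \in S k \/ exists j, (2 <= j < k)%N /\ x = m j.
  elim=> [//|k IH] /andP [hk1 hk2] x.
  case: (ltnP k 2) => hk.
    have -> : k = 1%N by lia.
    by split; [left | case=> // [[j [hj _]]]; lia].
  rewrite (IH ltac:(lia) x).
  have [E _] := Hst k hk ltac:(lia); rewrite E inE.
  split.
    case=> [/orP [/eqP ->|H]|[j [hj ->]]].
    - by right; exists k; split=> //; lia.
    - by left.
    - by right; exists j; split=> //; lia.
  case=> [H|[j [hj ->]]]; first by left; rewrite H orbT.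
  case: (ltnP j k) => hjk; first by right; exists j; split=> //; lia.
  have -> : j = k by lia.
  by left; rewrite eqxx.
set D := sdiff (S 2%N) (S n).
have HD : forall x, x \in D <-> exists j, (2 <= j < n)%N /\ x = m j.
  move=> x; rewrite /D /sdiff mem_filter; split.
    case/andP=> H1 H2; have [] := (Hmem n ltac:(lia) x).1 H2 => //.
    by rewrite (negbTE H1).
  case=> j [hj ->]; apply/andP; split.
    apply/negP => H0; have H2 := (Hmin n ltac:(lia)).2 _ H0.
    have H1 := Hinc j n ltac:(lia) ltac:(lia) (leqnn _).
    by move: (lt_le_trans H1 H2); rewrite ltxx.
  by apply/(Hmem n ltac:(lia)); right; exists j; split=> //; lia.
have HmD : forall x, x \in m n :: D <-> exists j, (2 <= j <= n)%N /\ x = m j.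
  move=> x; rewrite inE; split.
    case/orP=> [/eqP ->|/HD [j [hj ->]]]; first by exists n; split=> //; lia.
    by exists j; split=> //; lia.
  case=> j [hj ->]; case: (ltnP j n) => hjn.
    by apply/orP; right; apply/HD; exists j; split=> //; lia.
  have -> : j = n by lia.
  by rewrite eqxx.
split.
  by have := Hm n ltac:(lia); case: (S n).
split.
  have : m 2%N \in D by apply/HD; exists 2%N; split=> //; lia.
  by move=> H; apply/eqP => E; move: H; rewrite /D E.
split.
  by move=> x Hx; apply/(Hmem n ltac:(lia)); left.
split.
  pose L := map m (iota 2 (n - 2)).
  have -> : (n - 2)%N = size L by rewrite size_map size_iota.
  apply: perm_size; apply: uniq_perm.
  - exact: undup_uniq.
  - rewrite map_inj_in_uniq ?iota_uniq // => i j; rewrite !mem_iota => hi hj E.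
    apply/eqP; rewrite eqn_leq; apply/andP; split; rewrite leqNgt; apply/negP => H.
    + by have := Hinc j i ltac:(lia) H ltac:(lia); rewrite E ltxx.
    + by have := Hinc i j ltac:(lia) H ltac:(lia); rewrite E ltxx.
  - move=> x; rewrite mem_undup; apply/idP/idP.
      move/HD=> [j [hj ->]]; apply/mapP; exists j => //; rewrite mem_iota; lia.
    case/mapP=> j; rewrite mem_iota => hj ->; apply/HD; exists j; split=> //; lia.
split.
  rewrite Hm; last by lia.
  have := smaxP D; case: (smax D) => [a [Ha _]|E].
    by have [j [hj ->]] := (HD a).1 Ha; apply: Hinc; lia.
  have : m 2%N \in D by apply/HD; exists 2%N; split=> //; lia.
  by rewrite E.
move=> y z; rewrite Hm; last by lia.
case=> Hy [Hz [Hyz Hbet]].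
have [j [hj Ej]] := (HmD y).1 Hy; have [k [hk Ek]] := (HmD z).1 Hz.
subst y z.
have hjk : (j < k)%N by apply: Hinv Hyz; lia.
case: (eqVneq k j.+1) => [->|ne].
  exact: (Hst j ltac:(lia) ltac:(lia)).2.
have : m j.+1 \in m n :: D by apply/HmD; exists j.+1; split=> //; lia.
move/Hbet; rewrite !leNgt (Hinc j j.+1) ?(Hinc j.+1 k) //; lia.
Qed.

Lemma smax_cons x T : (exists2 y, y \in T & x <= y) -> smax (x :: T) = smax T.
Proof.
case=> y Hy Hxy; have := smaxP T; case: (smax T) => [a [Ha Hle]|E]; last by rewrite E in Hy.
apply: smax_eq; first by rewrite inE Ha orbT.
move=> z; rewrite inE => /orP [/eqP ->|Hz]; last exact: Hle.
exact: le_trans Hxy (Hle _ Hy).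
Qed.

Lemma backward cs n (hn : (3 <= n)%N) S2 Sn :
  rhs cs n S2 Sn ->
  exists S : nat -> seq int,
     S 2%N = S2 /\ S n = Sn /\
     (forall i : nat, (2 <= i)%N -> (i <= n - 1)%N -> step cs (S i) (S i.+1)).
Proof.
case=> HSn [HD [Hsub [Hsize [Hmax Hsucc]]]].
have [m Hm] : exists m, smin Sn = Some m.
  by case: (smin Sn) (smin_none Sn) => [m|[/(_ erefl) E]]; [exists m | rewrite E in HSn].
have [Hm1 Hm2] : m \in Sn /\ forall y, y \in Sn -> m <= y by have := sminP Sn; rewrite Hm.
rewrite Hm in Hmax Hsucc.
set D := sdiff S2 Sn in HD Hsize Hmax Hsucc.
have HDlt : forall x, x \in D -> x < m.
  move: Hmax; have := smaxP D; case: (smax D) => [a [_ Ha]|//] H x Hx.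
  exact: le_lt_trans (Ha _ Hx) H.
set l := sort <=%O (undup D).
have Hlsz : size l = (n - 2)%N by rewrite size_sort.
have Hlsort : sorted <%O l by rewrite sort_lt_sorted undup_uniq.
have Hlmem : l =i D by move=> x; rewrite mem_sort mem_undup.
pose d j := nth m l (j - 2).
have Hdn : d n = m by rewrite /d nth_default // Hlsz.
have Hdin : forall j, (2 <= j)%N -> (j < n)%N -> d j \in D.
  by move=> j h1 h2; rewrite -Hlmem mem_nth // Hlsz; lia.
have Hdinc : forall i j, (2 <= i)%N -> (i < j)%N -> (j <= n)%N -> d i < d j.
  move=> i j h1 h2 h3; case: (ltnP j n) => hj.
    apply: (sorted_ltn_nth lt_trans) => //; rewrite ?inE /= ?Hlsz; lia.
  have -> : j = n by lia.
  by rewrite Hdn; apply: HDlt; apply: Hdin; lia.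
have Hdle : forall i j, (2 <= i)%N -> (i <= j)%N -> (j <= n)%N -> d i <= d j.
  move=> i j h1 h2 h3; case: (ltngtP i j) => [H|H|->//]; first exact: ltW (Hdinc _ _ h1 H h3).
  lia.
pose T i := [seq d j | j <- iota i (n - i)] ++ Sn.
have Tcons : forall i, (i < n)%N -> T i = d i :: T i.+1.
  by move=> i hi; rewrite /T; have -> : (n - i)%N = (n - i.+1).+1 by lia.
have Tmin : forall i, (2 <= i <= n)%N -> smin (T i) = Some (d i).
  move=> i /andP [h1 h2]; apply: smin_eq.
    case: (ltnP i n) => hi; first by rewrite Tcons // mem_head.
    have -> : i = n by lia.
    by rewrite /T subnn /= Hdn.
  move=> y; rewrite mem_cat => /orP [/mapP [j]|Hy].
    by rewrite mem_iota => hj ->; apply: Hdle; lia.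
  apply: le_trans (Hm2 _ Hy); rewrite -Hdn; apply: Hdle; lia.
have T2 : S2 =i T 2%N.
  have El : [seq d j | j <- iota 2 (n - 2)] =i l.
    move=> x; apply/mapP/idP.
      case=> j; rewrite mem_iota => hj ->; rewrite Hlmem; apply: Hdin; lia.
    case/(nthP m) => k hk <-; exists (k + 2)%N; last by rewrite /d addnK.
    rewrite mem_iota; rewrite Hlsz in hk; lia.
  move=> x; rewrite /T mem_cat El Hlmem /D /sdiff mem_filter.
  by case E: (x \in Sn); rewrite /= ?andbT ?orbF //; apply: Hsub; rewrite E.
exists (fun i => if i == 2%N then S2 else T i).
split; first by rewrite eqxx.
split.
  have -> : (n == 2%N) = false by apply/eqP; lia.
  by rewrite /T subnn.
move=> i h1 h2.
have ET : (if i == 2%N then S2 else T i) =i T i.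
  by case: (eqVneq i 2%N) => [->|//]; exact: T2.
have -> : (i.+1 == 2%N) = false by apply/eqP; lia.
rewrite /step (smin_mem _ _ ET) (smax_mem _ _ ET) Tmin; last by lia.
rewrite Tmin; last by lia.
split.
  by move=> x; rewrite ET Tcons //; lia.
split.
  rewrite Tcons; last by lia.
  rewrite smax_cons; last first.
    exists m; first by rewrite /T mem_cat Hm1 orbT.
    by rewrite -Hdn; apply: Hdle; lia.
  have := smaxP (T i.+1); case: (smax _) => // E.
  have : m \in T i.+1 by rewrite /T mem_cat Hm1 orbT.
  by rewrite E.
apply: Hsucc; split; first by rewrite inE Hdin ?orbT //; lia.
split.
  case: (ltnP i.+1 n) => hi; first by rewrite inE Hdin ?orbT //; lia.
  have -> : i.+1 = n by lia.
  by rewrite Hdn mem_head.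
split; first by apply: Hdinc; lia.
move=> z; rewrite inE => /orP [/eqP ->|Hz].
  by right; rewrite -Hdn; apply: Hdle; lia.
rewrite -Hlmem in Hz; case/(nthP m): Hz => k hk <-.
have -> : nth m l k = d (k + 2)%N by rewrite /d addnK.
rewrite Hlsz in hk.
case: (leqP (k + 2) i) => hki.
  by left; apply: Hdle; lia.
by right; apply: Hdle; lia.
Qed.

Theorem mainTheorem6 (cs : seq dconstr) (c : int) (hc : 0 < c)
  (hin : (true, - c) \in cs) (n : nat) (hn : (3 <= n)%N) (S2 Sn : seq int) :
  (exists S : nat -> seq int,
     S 2%N = S2 /\ S n = Sn /\
     (forall i : nat, (2 <= i)%N -> (i <= n - 1)%N -> step cs (S i) (S i.+1)))
  <-> rhs cs n S2 Sn.
Proof.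
split; last exact: backward.
case=> S [<- [<- H]]; exact: (forward hc hin _ hn _ H).
Qed.
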